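(* Let $L$ be a frame. The map $\nu(F)=\bigcap_{a\in F}\mathfrak o(a)$ restricts to an order isomorphism from $(\mathsf R(L),\sqsubseteq)$ onto $(\{\mathrm{fit}(S)\mid S\in\mathcal S_c(L)\},\subseteq)$, with inverse $S\mapsto\{a\in L\mid S\subseteq\mathfrak o(a)\}$.
   Context: A frame is a complete lattice $L$ with $(\bigvee A)\wedge b=\bigvee_{a\in A}(a\wedge b)$, Heyting implication $\to$. A sublocale is a subset $S\subseteq L$ closed under all meets with $a\to s\in S$ for $a\in L,s\in S$; sublocales form a coframe $\mathsf{Sl}(L)$ under inclusion with joins $\bigvee_i S_i=\{\bigwedge A\mid A\subseteq\bigcup_i S_i\}$. $\mathfrak o(a)=\{a\to b\mid b\in L\}$, $\mathfrak c(a)={\uparrow}a$. $\mathrm{fit}(S)=\bigcap\{\mathfrak o(a)\mid S\subseteq\mathfrak o(a)\}$. $\mathcal S_c(L)$ is the set of joins in $\mathsf{Sl}(L)$ of closed sublocales $\mathfrak c(a)$. Filters are nonempty up-closed subsets closed under finite meets, ordered by reverse inclusion $\sqsubseteq$. $\mathsf R(L)$ is the set of regular filters, i.e. filters of the form $\{x\in L\mid\forall b\in G,\ b\vee x=1\}$ for a filter $G$ (equivalently, intersections of closed filters $\{x\mid x\vee a=1\}$). *)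

(* Defs.v *)
Set Implicit Arguments.

Definition pset (T : Type) := T -> Prop.
Definition subset {T} (A B : pset T) : Prop := forall x, A x -> B x.

Record cLattice := CLattice {
  car :> Type;
  le : car -> car -> Prop;
  le_refl : forall a, le a a;
  le_trans : forall a b c, le a b -> le b c -> le a c;
  le_antisym : forall a b, le a b -> le b a -> a = b;
  sup : pset car -> car;
  sup_ub : forall (A : pset car) a, A a -> le a (sup A);
  sup_least : forall (A : pset car) b, (forall a, A a -> le a b) -> le (sup A) b
}.

Arguments le {c0} _ _.
Arguments sup {c0} _.

Section Ops.
Context {L : cLattice}.
Local Notation T := (car L).

Definition inf (A : pset T) : T := sup (fun x => forall a, A a -> le x a).
Definition meet (a b : T) : T := inf (fun x => x = a \/ x = b).
Definition join (a b : T) : T := sup (fun x => x = a \/ x = b).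
Definition top : T := sup (fun _ => True).

Definition imp (a b : T) : T := sup (fun x => le (meet x a) b).

Definition is_frame : Prop :=
  forall (A : pset T) (b : T),
    meet (sup A) b = sup (fun x => exists a, A a /\ x = meet a b).

Definition sublocale (S : pset T) : Prop :=
  (forall A : pset T, subset A S -> S (inf A)) /\
  (forall a s, S s -> S (imp a s)).

Definition opn (a : T) : pset T := fun x => exists b, x = imp a b.
Definition cls (a : T) : pset T := fun x => le a x.

Definition fit (S : pset T) : pset T :=
  fun x => forall a, subset S (opn a) -> opn a x.

(** S_c(L): joins in Sl(L) of families of closed sublocales c(b), b in B,
    using the join formula  \/_i S_i = { /\ A | A <= U_i S_i }. *)
Definition Sc (S : pset T) : Prop :=
  exists B : pset T,
    S = (fun x => exists A : pset T,
            subset A (fun y => exists b, B b /\ cls b y) /\ x = inf A).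

Definition filter (F : pset T) : Prop :=
  (exists x, F x) /\
  (forall x y, F x -> le x y -> F y) /\
  (forall x y, F x -> F y -> F (meet x y)).

Definition fle (F G : pset T) : Prop := subset G F.

Definition regular (F : pset T) : Prop :=
  exists G, filter G /\ F = (fun x => forall b, G b -> join b x = top).

Definition nu (F : pset T) : pset T := fun x => forall a, F a -> opn a x.
Definition mu (S : pset T) : pset T := fun a => subset S (opn a).

Definition FitSc (T : pset T) : Prop := exists S, Sc S /\ T = fit S.

End Ops.
Arguments is_frame : clear implicits.
Arguments top : clear implicits.

(* Main.v *)
Require Import Defs.
From Stdlib Require Import FunctionalExtensionality PropExtensionality.

Section S.
Variable L : cLattice.
Variable HL : is_frame L.

Lemma inf_lb (A : pset L) a : A a -> le (inf A) a.
Proof. intros H. apply sup_least. intros x Hx. apply Hx, H. Qed.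
Lemma inf_gl (A : pset L) x : (forall a, A a -> le x a) -> le x (inf A).
Proof. intros H. apply (@sup_ub L (fun y => forall a, A a -> le y a)). exact H. Qed.
Lemma meet_l (a b : L) : le (meet a b) a.
Proof. apply inf_lb; auto. Qed.
Lemma meet_r (a b : L) : le (meet a b) b.
Proof. apply inf_lb; auto. Qed.
Lemma meet_glb (x a b : L) : le x a -> le x b -> le x (meet a b).
Proof. intros; apply inf_gl; intros y [->| ->]; auto. Qed.
Lemma join_l (a b : L) : le a (join a b).
Proof. apply sup_ub; auto. Qed.
Lemma join_r (a b : L) : le b (join a b).
Proof. apply sup_ub; auto. Qed.
Lemma join_lub (x a b : L) : le a x -> le b x -> le (join a b) x.
Proof. intros; apply sup_least; intros y [->| ->]; auto. Qed.
Lemma top_max (x : L) : le x (top L).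
Proof. apply sup_ub; auto. Qed.
Lemma top_eq (x : L) : le (top L) x -> x = top L.
Proof. intros; apply le_antisym; auto using top_max. Qed.
Lemma meet_id (c a : L) : le c a -> meet c a = c.
Proof. intros; apply le_antisym. apply meet_l. apply meet_glb; auto using le_refl. Qed.

Lemma frame_pair (a b c x : L) : le (meet a c) x -> le (meet b c) x -> le (meet (join a b) c) x.
Proof.
  intros H1 H2. unfold join. rewrite HL. apply sup_least.
  intros z [y [[-> | ->] ->]]; auto.
Qed.

Lemma imp_adj (x a b : L) : le x (imp a b) <-> le (meet x a) b.
Proof.
  split.
  - intros H. eapply le_trans.
    + apply meet_glb. eapply le_trans; [apply meet_l| exact H]. apply meet_r.
    + unfold imp. rewrite HL. apply sup_least. intros z [y [Hy ->]]. exact Hy.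
  - intros H. apply sup_ub. exact H.
Qed.

Lemma opn_fix (a y : L) : opn a y -> imp a y = y.
Proof.
  intros [b ->]. apply le_antisym.
  - apply (proj2 (imp_adj _ _ _)).
    apply le_trans with (meet (imp a b) a).
    + apply meet_glb; [|apply meet_r]. apply (proj1 (imp_adj _ _ _)), le_refl.
    + apply (proj1 (imp_adj _ _ _)), le_refl.
  - apply imp_adj, meet_l.
Qed.

Lemma inf_opn (a : L) (A : pset L) : subset A (opn a) -> opn a (inf A).
Proof.
  intros H. exists (inf A). apply le_antisym.
  - apply imp_adj, meet_l.
  - apply inf_gl. intros y Hy. rewrite <- (opn_fix _ _ (H y Hy)).
    apply (proj2 (imp_adj _ _ _)). apply le_trans with (inf A).
    apply (proj1 (imp_adj _ _ _) (le_refl _ _)). apply inf_lb, Hy.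
Qed.

Lemma cls_opn (a b : L) : subset (cls b) (opn a) <-> join b a = top L.
Proof.
  split.
  - intros H. destruct (H (join b a) (join_l b a)) as [c Hc].
    rewrite Hc. apply top_eq. apply imp_adj.
    assert (Ha : le a c).
    { assert (le a (imp a c)) by (rewrite <- Hc; apply join_r).
      apply imp_adj in H0. rewrite meet_id in H0 by apply le_refl. exact H0. }
    eapply le_trans; [apply meet_r|exact Ha].
  - intros Hj x Hx. exists x. apply le_antisym.
    + apply imp_adj, meet_l.
    + set (i := imp a x).
      apply le_trans with (meet (join b a) i).
      * apply meet_glb; [rewrite Hj; apply top_max| apply le_refl].
      * apply frame_pair.
        -- eapply le_trans; [apply meet_l|exact Hx].
        -- assert (E : meet a i = meet i a) by (apply le_antisym; apply meet_glb;
              (apply meet_l || apply meet_r)).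
           rewrite E. apply imp_adj, le_refl.
Qed.

Definition SB (B : pset L) : pset L := fun x => exists A : pset L,
  subset A (fun y => exists b, B b /\ cls b y) /\ x = inf A.
Definition RB (B : pset L) : pset L := fun x => forall b, B b -> join b x = top L.

Lemma mu_SB (B : pset L) : mu (SB B) = RB B.
Proof.
  extensionality a. apply propositional_extensionality. split.
  - intros H b Hb. apply cls_opn. intros x Hx. apply H.
    exists (fun y => y = x). split.
    + intros y ->. exists b; auto.
    + apply le_antisym. apply inf_gl; intros y ->; apply le_refl. apply inf_lb; auto.
  - intros H x [A [HA ->]]. apply inf_opn. intros y Hy.
    destruct (HA y Hy) as [b [Hb Hby]]. apply (proj2 (cls_opn a b) (H b Hb)), Hby.
Qed.

Lemma mnm (S : pset L) : mu (nu (mu S)) = mu S.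
Proof.
  extensionality a. apply propositional_extensionality. split.
  - intros H x Hx. apply H. intros c Hc. apply Hc, Hx.
  - intros H x Hx. apply Hx, H.
Qed.

Lemma nmn (F : pset L) : nu (mu (nu F)) = nu F.
Proof.
  extensionality a. apply propositional_extensionality. split.
  - intros H c Hc. apply H. intros x Hx. apply Hx, Hc.
  - intros H c Hc. apply Hc, H.
Qed.

Lemma join_meet_top (x y a : L) : join x a = top L -> join y a = top L -> join (meet x y) a = top L.
Proof.
  intros H1 H2. apply top_eq. rewrite <- H1. apply join_lub; [|apply join_r].
  apply le_trans with (meet (join y a) x).
  - apply meet_glb; [rewrite H2; apply top_max|apply le_refl].
  - apply frame_pair.
    + apply le_trans with (meet x y); [|apply join_l].
      apply meet_glb; [apply meet_r|apply meet_l].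
    + eapply le_trans; [apply meet_l|apply join_r].
Qed.

Lemma RB_regular (B : pset L) : regular (RB B).
Proof.
  exists (fun x => forall a, RB B a -> join x a = top L). split.
  - split; [|split].
    + exists (top L). intros a _. apply top_eq, join_l.
    + intros x y Hx Hxy a Ha. apply top_eq. rewrite <- (Hx a Ha).
      apply join_lub. eapply le_trans; [exact Hxy|apply join_l]. apply join_r.
    + intros x y Hx Hy a Ha. apply join_meet_top; auto.
  - extensionality x. apply propositional_extensionality. split.
    + intros H g Hg. apply Hg, H.
    + intros H b Hb. apply H. intros a Ha. apply Ha, Hb.
Qed.

End S.

Theorem mainTheorem13 (L : cLattice) (HL : is_frame L) :
  (forall F : pset L, regular F -> FitSc (nu F)) /\
  (forall T : pset L, FitSc T -> regular (mu T)) /\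
  (forall F : pset L, regular F -> mu (nu F) = F) /\
  (forall T : pset L, FitSc T -> nu (mu T) = T) /\
  (forall F G : pset L, regular F -> regular G ->
     (fle F G <-> subset (nu F) (nu G))).
Proof.
  assert (P3 : forall F : pset L, regular F -> mu (nu F) = F).
  { intros F [G [_ ->]]. change (fun x => forall b, G b -> join b x = top L) with (@RB L G).
    rewrite <- (@mu_SB L HL G). apply mnm. }
  split; [|split; [|split; [exact P3|split]]].
  - intros F [G [_ ->]]. exists (@SB L G). split.
    + exists G. reflexivity.
    + change (fun x => forall b, G b -> join b x = top L) with (@RB L G).
      rewrite <- (@mu_SB L HL G). reflexivity.
  - intros T [S [[B ->] ->]].
    change (regular (mu (nu (mu (@SB L B))))).
    rewrite (@mnm L (@SB L B)), (@mu_SB L HL). apply (@RB_regular L HL).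
  - intros T [S [_ ->]]. change (fit S) with (nu (mu S)). apply nmn.
  - intros F G HF HG. split.
    + intros H x Hx a Ha. apply Hx, H, Ha.
    + intros H. rewrite <- (P3 F HF), <- (P3 G HG).
      intros a Ha x Hx. apply Ha, H, Hx.
Qed.
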